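(* Let $X$ be a $\mu$-space. Then $X$ has a fundamental compact resolution if and only if $L_p(X)$ has a fundamental bounded resolution.
   Context: A $\mu$-space is a Tychonoff space in which every functionally bounded subset (one on which every continuous real function is bounded) is relatively compact. $L(X)$ is the free locally convex space over $X$ (the vector space with Hamel basis $X$, identified with the dual of $C_p(X)$, the continuous real functions on $X$ with the pointwise topology), and $L_p(X)$ denotes $L(X)$ with the weak topology $\sigma(L(X),C(X))$, i.e. the weak* dual of $C_p(X)$. Order $\mathbb{N}^{\mathbb{N}}$ pointwise. A fundamental compact resolution of $X$ is a family $\{K_\alpha:\alpha\in\mathbb{N}^{\mathbb{N}}\}$ of compact sets covering $X$ with $K_\alpha\subseteq K_\beta$ for $\alpha\le\beta$ such that every compact subset of $X$ lies in some $K_\alpha$. A fundamental bounded resolution of a locally convex space $F$ is a family of bounded sets with the same monotonicity, covering $F$, such that every bounded subset of $F$ lies in some member. *)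

(* Defs.v *)
From HB Require Import structures.
From mathcomp Require Import all_boot all_order all_algebra.
From mathcomp Require Import all_classical all_reals all_analysis.
From mathcomp Require Import Rstruct Rstruct_topology.
Set Implicit Arguments. Unset Strict Implicit. Unset Printing Implicit Defensive.
Import Order.TTheory GRing.Theory Num.Theory.
Local Open Scope classical_set_scope.
Local Open Scope ring_scope.

Notation realR := Rdefinitions.R.

Definition completely_regular (X : topologicalType) : Prop :=
  forall (a : X) (B : set X), closed B -> ~ B a ->
    exists f : X -> realR, continuous f /\ f a = 0 /\ (forall b, B b -> f b = 1).

Definition tychonoff (X : topologicalType) : Prop :=
  hausdorff_space X /\ completely_regular X.

Definition functionally_bounded (X : topologicalType) (A : set X) : Prop :=
  forall f : X -> realR, continuous f ->
    exists M : realR, forall x, A x -> `|f x| <= M.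

Definition relatively_compact (X : topologicalType) (A : set X) : Prop :=
  compact (closure A).

Definition mu_space (X : topologicalType) : Prop :=
  tychonoff X /\
  forall A : set X, functionally_bounded A -> relatively_compact A.

Definition le_baire (a b : nat -> nat) : Prop := forall n, (a n <= b n)%N.

Definition fundamental_compact_resolution (X : topologicalType)
    (K : (nat -> nat) -> set X) : Prop :=
  [/\ (forall a, compact (K a)),
      (forall a b, le_baire a b -> K a `<=` K b),
      (forall x : X, exists a, K a x) &
      (forall C : set X, compact C -> exists a, C `<=` K a)].

(** L(X): finite formal real linear combinations of points of X,
    i.e. finitely supported functions X -> R (Hamel basis X). *)
Definition LX (X : topologicalType) : Type :=
  {c : X -> realR | finite_set [set x | c x != 0]}.

Definition Lpair (X : topologicalType) (chi : LX X) (f : X -> realR) : realR :=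
  \sum_(x \in [set: X]) (proj1_sig chi x * f x).

(** Bounded subsets of L_p(X) = (L(X), sigma(L(X), C(X))): the weak topology
    is generated by the seminorms chi |-> |<chi,f>|, f in C(X), so a set is
    bounded iff each of these seminorms is bounded on it. *)
Definition Lp_bounded (X : topologicalType) (B : set (LX X)) : Prop :=
  forall f : X -> realR, continuous f ->
    exists M : realR, forall chi, B chi -> `|Lpair chi f| <= M.

Definition Lp_fundamental_bounded_resolution (X : topologicalType)
    (B : (nat -> nat) -> set (LX X)) : Prop :=
  [/\ (forall a, Lp_bounded (B a)),
      (forall a b, le_baire a b -> B a `<=` B b),
      (forall chi : LX X, exists a, B a chi) &
      (forall D : set (LX X), Lp_bounded D -> exists a, D `<=` B a)].

(* Main.v *)
Set Warnings "-notation-overridden,-ambiguous-paths,-notation-incompatible-prefix".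
Require Import Defs.
From HB Require Import structures.
From mathcomp Require Import all_boot all_order all_algebra.
From mathcomp Require Import all_classical all_reals all_analysis.
From mathcomp Require Import Rstruct Rstruct_topology finmap.
From mathcomp Require Import ring lra.
Set Implicit Arguments. Unset Strict Implicit. Unset Printing Implicit Defensive.
Import Order.TTheory GRing.Theory Num.Theory.
Local Open Scope classical_set_scope.
Local Open Scope ring_scope.

Definition supp (X : topologicalType) (chi : LX X) : set X :=
  [set x | proj1_sig chi x != 0].

Lemma supp_fin (X : topologicalType) (chi : LX X) : finite_set (supp chi).
Proof. exact: (proj2_sig chi). Qed.

Definition Ls (X : topologicalType) (chi : LX X) : {fset X} := fset_set (supp chi).

Lemma in_Ls (X : topologicalType) (chi : LX X) x : (x \in Ls chi) = (proj1_sig chi x != 0).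
Proof. rewrite /Ls (in_fset_set (supp_fin chi)); apply/idP/idP => [/set_mem //|H]; exact: mem_set. Qed.

Lemma Ls_uniq (X : topologicalType) (chi : LX X) : uniq (Ls chi).
Proof. exact: fset_uniq. Qed.

Lemma LpairE (X : topologicalType) (chi : LX X) f :
  Lpair chi f = \sum_(x <- Ls chi) proj1_sig chi x * f x.
Proof.
rewrite /Lpair -(fsbig_widen (supp chi) setT) //.
  rewrite fsbig_finite; [by [] | exact: supp_fin].
move=> x [_ /=]; rewrite /supp /= => /negP; rewrite negbK => /eqP ->.
by rewrite mul0r.
Qed.

Lemma Lpair_ext (X : topologicalType) (chi : LX X) f g :
  (forall x, proj1_sig chi x != 0 -> f x = g x) -> Lpair chi f = Lpair chi g.
Proof.
move=> H; rewrite !LpairE; apply: eq_big_seq => x; rewrite in_Ls => /H ->.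
by [].
Qed.

Lemma LpairD (X : topologicalType) (chi : LX X) f g :
  Lpair chi (fun x => f x + g x) = Lpair chi f + Lpair chi g.
Proof. by rewrite !LpairE -big_split; apply: eq_bigr => x _; rewrite mulrDr. Qed.

Lemma LpairZ (X : topologicalType) (chi : LX X) c f :
  Lpair chi (fun x => c * f x) = c * Lpair chi f.
Proof.
by rewrite !LpairE mulr_sumr; apply: eq_bigr => x _; rewrite mulrCA.
Qed.

Definition L1 (X : topologicalType) (chi : LX X) : realR :=
  \sum_(x <- Ls chi) `|proj1_sig chi x|.

Lemma L1_ge0 (X : topologicalType) (chi : LX X) : 0 <= L1 chi.
Proof. by apply: sumr_ge0 => x _. Qed.

Lemma Lpair_le (X : topologicalType) (chi : LX X) f m :
  (forall x, proj1_sig chi x != 0 -> `|f x| <= m) -> `|Lpair chi f| <= L1 chi * m.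
Proof.
move=> H; rewrite LpairE /L1 mulr_suml.
apply: le_trans (ler_norm_sum _ _ _) _.
rewrite big_seq_cond [X in _ <= X]big_seq_cond.
apply: ler_sum => x /andP[]; rewrite in_Ls => /H Hx _.
by rewrite normrM ler_wpM2l.
Qed.

Definition delta_fun (X : topologicalType) (x : X) : X -> realR :=
  fun y => if y == x then 1 else 0.

Lemma delta_fin (X : topologicalType) (x : X) :
  finite_set [set y | delta_fun x y != 0].
Proof.
apply: (sub_finite_set _ (finite_set1 x)) => y /=; rewrite /delta_fun.
case: (y == x) / eqP => // _ /negP; by rewrite eqxx.
Qed.

Definition delta (X : topologicalType) (x : X) : LX X :=
  exist _ (delta_fun x) (delta_fin x).

Lemma Lpair_delta (X : topologicalType) (x : X) f : Lpair (delta x) f = f x.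
Proof.
rewrite /Lpair -(fsbig_widen [set x] setT) //.
  by rewrite fsbig_set1 /= /delta_fun eqxx mul1r.
move=> y [_ /= /eqP]; rewrite /delta_fun => /negbTE ->; by rewrite mul0r.
Qed.
Lemma cpt_bound (X : topologicalType) (A : set X) (f : X -> realR) :
  compact A -> continuous f -> exists2 M, 0 < M & forall x, A x -> `|f x| <= M.
Proof.
move=> cA cf.
have := @compact_bounded realR realR^o _ (continuous_compact (continuous_subspaceT cf) cA).
move=> /pinfty_ex_gt0 [M M0 HM]; exists M => // x Ax.
by apply: (HM (f x)); exists x.
Qed.

Lemma contD (X : topologicalType) (f g : X -> realR) :
  continuous f -> continuous g -> continuous (fun x => f x + g x).
Proof.
move=> cf cg x.
have H := @cvgD _ realR^o _ _ _ f g (f x) (g x) (cf x) (cg x).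
exact: H.
Qed.

Lemma contM (X : topologicalType) (f g : X -> realR) :
  continuous f -> continuous g -> continuous (fun x => f x * g x).
Proof.
move=> cf cg x.
have H := @cvgM _ _ _ _ f g (f x) (g x) (cf x) (cg x).
exact: H.
Qed.

Lemma contN (X : topologicalType) (f : X -> realR) :
  continuous f -> continuous (fun x => - f x).
Proof.
move=> cf x.
have H := @cvgN _ realR^o _ _ _ f (f x) (cf x).
exact: H.
Qed.

Lemma contC (X : topologicalType) (c : realR) :
  continuous (fun _ : X => c).
Proof. by move=> x; apply: cvg_cst. Qed.

Lemma contn (X : topologicalType) (f : X -> realR) :
  continuous f -> continuous (fun x => `|f x|).
Proof.
move=> cf x.
have H := @cvg_norm _ realR^o _ _ _ f (f x) (cf x).
exact: H.
Qed.

Lemma contmax (X : topologicalType) (f g : X -> realR) :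
  continuous f -> continuous g -> continuous (fun x => Num.max (f x) (g x)).
Proof.
move=> cf cg x.
have H := @continuous_max _ _ f g x (cf x) (cg x).
exact: H.
Qed.

Lemma contmin (X : topologicalType) (f g : X -> realR) :
  continuous f -> continuous g -> continuous (fun x => Num.min (f x) (g x)).
Proof.
move=> cf cg x.
have H := @continuous_min _ _ f g x (cf x) (cg x).
exact: H.
Qed.
Lemma cont_local (X : topologicalType) (f : X -> realR) :
  (forall x, exists U : set X, exists g : X -> realR,
     [/\ open U, U x, continuous g & forall y, U y -> f y = g y]) ->
  continuous f.
Proof.
move=> H x; have [U [g [oU Ux cg E]]] := H x.
rewrite /continuous_at (E x Ux).
apply: cvg_trans (cg x).
apply: near_eq_cvg.
have : \forall y \near x, U y by apply: open_nbhs_nbhs.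
apply: filterS => y Uy; exact/esym/E.
Qed.


Lemma seq_lim (X : topologicalType) (h : nat -> X -> realR) (d : nat -> realR) :
  (forall n, continuous (h n)) ->
  (forall n m x, (n <= m)%N -> `|h m x - h n x| <= d n) ->
  (forall e, 0 < e -> exists N, d N < e) ->
  exists f : X -> realR, continuous f /\ forall n x, `|f x - h n x| <= d n.
Proof.
move=> hc hd de.
have cv : forall x, cvg (h ^~ x @ \oo).
  move=> x; apply/(@cauchy_cvgP realR^o); apply: cauchy_exP => e e0.
  have [N HN] := de e e0.
  exists (h N x); exists N => // n /= Nn.
  rewrite /ball /= distrC; exact: le_lt_trans (hd _ _ _ Nn) HN.
pose f x := lim (h ^~ x @ \oo).
have bd : forall n x, `|f x - h n x| <= d n.
  move=> n x; apply/ler_addgt0Pr => e e0.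
  have := @cvgr_dist_lt _ realR^o _ _ _ (h^~ x) (f x) (cv x) _ e0; move=> [M _ HM].
  have /HM /= H1 : (M <= maxn M n)%N by apply: leq_maxl.
  have H2 := hd n (maxn M n) x (leq_maxr M n).
  rewrite -/(f x) in H1.
  rewrite (_ : f x - h n x = (f x - h (maxn M n) x) + (h (maxn M n) x - h n x)); last by rewrite addrA subrK.
  rewrite addrC; apply: le_trans (ler_normD _ _) _.
  by rewrite lerD // ltW.
exists f; split => // x.
apply/(@cvgrPdist_lt _ realR^o) => e e0.
have e30 : 0 < e / 3 by rewrite divr_gt0.
have [N HN] := de _ e30.
have H := @cvgr_dist_lt _ realR^o _ _ _ (h N) (h N x) (hc N x) _ e30.
near=> y.
have Hy : `|h N x - h N y| < e / 3 by near: y; exact: H.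
rewrite (_ : f x - f y = (f x - h N x) + (h N x - h N y) + (h N y - f y)); last first.
  by rewrite !addrA subrK subrK.
apply: le_lt_trans (ler_normD _ _) _.
have := bd N x; have := bd N y; move: HN; set a := d N => HN Hb1 Hb2.
rewrite distrC in Hb1.
have -> : e = e / 3 + e / 3 + e / 3 by field.
rewrite ltrD //; first (apply: le_lt_trans (ler_normD _ _) _; rewrite ltrD //).
- exact: le_lt_trans Hb2 HN.
- exact: le_lt_trans Hb1 HN.
Unshelve. all: by end_near.
Qed.

Lemma sum_ge_term (X : topologicalType) (chi : LX X) (G : X -> realR) y :
  (forall z, 0 <= G z) -> proj1_sig chi y != 0 -> G y <= \sum_(z <- Ls chi) G z.
Proof.
move=> G0 cy; rewrite (bigD1_seq y) ?Ls_uniq ?in_Ls //=.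
by rewrite lerDl sumr_ge0.
Qed.

Lemma S1_step (X : topologicalType) (hH : hausdorff_space X) (hR : completely_regular X) (G : X -> realR)
  (k : nat) (a : realR) (h : X -> realR) (chi : LX X) (x : X) :
  proj1_sig chi x != 0 -> a + 2 < G x -> continuous G -> (forall y, 0 <= G y) ->
  exists (u : X -> realR) (a' : realR),
    [/\ continuous u, a + 1 <= a', (forall y, proj1_sig chi y != 0 -> G y <= a'),
        (forall y, u y != 0 -> a + 1 < G y) &
        k%:R < `|Lpair chi (fun y => h y + u y)| ].
Proof.
move=> cx Gx cG G0.
pose F := [set y | proj1_sig chi y != 0 /\ y <> x].
have finF : finite_set F.
  by apply: (sub_finite_set _ (supp_fin chi)) => y [].
have clF : closed F by apply: compact_closed hH (finite_compact finF).
have nFx : ~ F x by move=> [_].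
have [phi [cphi [phix phiF]]] := hR x F clF nFx.
pose T y := Num.max 0 (1 - 2 * `|G y - G x|).
pose t := (k%:R + 1 + `|Lpair chi h|) / proj1_sig chi x.
pose u y := t * ((1 - phi y) * T y).
exists u, (Num.max (a + 1) (\sum_(y <- Ls chi) G y)); split.
- apply: contM; first exact: contC.
  apply: contM; first by apply: contD; [exact: contC | exact: contN].
  apply: contmax; first exact: contC.
  apply: contD; first exact: contC.
  apply: contN; apply: contM; first exact: contC.
  apply: contn; apply: contD => //; exact: contC.
- by rewrite le_max lexx.
- move=> y cy; rewrite le_max; apply/orP; right; exact: sum_ge_term.
- move=> y uy.
  have Ty : T y != 0.
    apply/negP => /eqP T0; move: uy; rewrite /u T0 !mulr0; by move/negP; rewrite eqxx.
  have Tpos : 0 < 1 - 2 * `|G y - G x|.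
    rewrite ltNge; apply: contraNN Ty => le0.
    by rewrite /T; apply/eqP; apply/max_idPl.
  have := ler_norm (G x - G y); rewrite distrC; lra.
- rewrite LpairD.
  have -> : Lpair chi u = k%:R + 1 + `|Lpair chi h|.
    rewrite LpairE (bigD1_seq x) ?Ls_uniq ?in_Ls //=.
    rewrite big_seq_cond big1 ?addr0; last first.
      move=> y /andP[]; rewrite in_Ls => cy yx.
      rewrite /u phiF ?subrr ?mul0r ?mulr0 //; split => //; exact/eqP.
    rewrite /u phix subr0 mul1r /T subrr normr0 mulr0 subr0.
    have -> : Num.max 0 1 = 1 :> realR by apply/max_idPr; exact: ler01.
    rewrite mulr1 /t; field; exact: cx.
  have H2 : 0 <= Lpair chi h + `|Lpair chi h|.
    by rewrite addrC -lerBlDr sub0r -normrN ler_norm.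
  have k0 : 0 <= k%:R :> realR by [].
  rewrite ger0_norm; lra.
Qed.

Fixpoint S1_state (X : topologicalType)
  (sel : nat -> realR -> (X -> realR) -> LX X * ((X -> realR) * realR))
  (k : nat) : realR * (X -> realR) :=
  match k with
  | 0 => (0, fun _ => 0)
  | k'.+1 => let s := S1_state sel k' in let p := sel k' s.1 s.2 in
     (p.2.2, fun y => s.2 y + p.2.1 y)
  end.

Lemma S1 (X : topologicalType) (hH : hausdorff_space X) (hR : completely_regular X)
  (D : set (LX X)) : Lp_bounded D ->
  functionally_bounded [set x | exists2 chi, D chi & proj1_sig chi x != 0].
Proof.
move=> bD; apply: contrapT => nfb.
have [g [cg gunb]] : exists g : X -> realR, continuous g /\ forall M : realR,
    exists x, (exists2 chi, D chi & proj1_sig chi x != 0) /\ M < `|g x|.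
  apply: contrapT => H1; apply: nfb => g cg.
  apply: contrapT => H2; apply: H1; exists g; split => // M.
  apply: contrapT => H3; apply: H2; exists M => x Sx.
  rewrite leNgt; apply/negP => lt; apply: H3; by exists x.
pose G y := `|g y|.
have cG : continuous G by apply: contn.
have G0 : forall y, 0 <= G y by move=> y; rewrite /G.
have step : forall (k : nat) (a : realR) (h : X -> realR),
   exists p : LX X * ((X -> realR) * realR),
   [/\ D p.1, continuous p.2.1, a + 1 <= p.2.2 /\
       (forall y, proj1_sig p.1 y != 0 -> G y <= p.2.2),
       (forall y, p.2.1 y != 0 -> a + 1 < G y) &
       k%:R < `|Lpair p.1 (fun y => h y + p.2.1 y)| ].
  move=> k a h.
  have [x [[chi Dc cx] gx]] := gunb (a + 2).
  have [u [a' [cu aa' Ga' uG Lk]]] := S1_step hH hR k h cx gx cG G0.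
  by exists (chi, (u, a')).
pose sel k a h := projT1 (cid (step k a h)).
have selP k a h := projT2 (cid (step k a h)).
pose st := S1_state sel.
pose chi k := (sel k (st k).1 (st k).2).1.
pose u k := (sel k (st k).1 (st k).2).2.1.
have hstep k y : (st k.+1).2 y = (st k).2 y + u k y by [].
have P k := selP k (st k).1 (st k).2.
have astep k : (st k.+1).1 = (sel k (st k).1 (st k).2).2.2 by [].
have a_ge k : k%:R <= (st k).1.
  elim: k => [|k IH] //=.
  have [_ _ [a1 _] _ _] := P k.
  rewrite -natr1 -astep in a1 *; lra.
have a_mono n i : (st n).1 <= (st (n + i)%N).1.
  elim: i => [|i IH]; first by rewrite addn0.
  have [_ _ [a1 _] _ _] := P (n + i)%N.
  rewrite addnS astep; lra.
have uz j y : u j y != 0 -> j%:R + 1 < G y.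
  move=> uy; have [_ _ _ H _] := P j.
  have := H y uy; have := a_ge j; lra.
have stab n m y : (n <= m)%N -> (forall j, (n <= j)%N -> u j y = 0) ->
    (st m).2 y = (st n).2 y.
  move=> nm H; rewrite -(subnKC nm); elim: (m - n)%N => [|i IH].
    by rewrite addn0.
  by rewrite addnS hstep IH H ?addr0 // leq_addr.
pose bound y := (Num.truncn (G y)).+1.
have ub j y : (bound y <= j)%N -> u j y = 0.
  move=> bj; apply/eqP; apply: contraT => /uz.
  have := Num.Theory.truncnS_gt (G y); rewrite -/(bound y).
  have : (bound y)%:R <= j%:R :> realR by rewrite ler_nat.
  lra.
pose f y := (st (bound y)).2 y.
have suppz k y j : proj1_sig (chi k) y != 0 -> (k.+1 <= j)%N -> u j y = 0.
  move=> cy kj; apply/eqP; apply: contraT => uy.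
  have [_ _ [_ Ga] _ _] := P k.
  have := Ga y cy; rewrite -astep => Gy.
  have [_ _ _ H _] := P j.
  have := H y uy.
  have := a_mono k.+1 (j - k.+1)%N; rewrite subnKC //.
  lra.
have fk k y : proj1_sig (chi k) y != 0 -> f y = (st k.+1).2 y.
  move=> cy; rewrite /f.
  rewrite -(@stab (bound y) (maxn (bound y) k.+1) y) ?leq_maxl //; last first.
    by move=> j bj; apply: ub.
  apply: stab; first exact: leq_maxr.
  by move=> j kj; apply: suppz cy kj.
have hc k : continuous (st k).2.
  elim: k => [|k IH] /=; first exact: contC.
  apply: contD => //; by have [_ cu _ _ _] := P k.
have cf : continuous f.
  apply: cont_local => x.
  pose N := (bound x).+1.
  exists (G @^-1` [set r | r < (bound x)%:R + 1]), (st N).2; split => //.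
  - apply: open_comp; last exact: open_lt.
    by move=> y _; apply: cG.
  - rewrite /= /bound.
    have := Num.Theory.truncnS_gt (G x); lra.
  - move=> y Gy; rewrite /f; symmetry; apply: stab.
      rewrite /N /bound ltnS Num.Theory.truncn_le_nat.
      by rewrite -natr1.
    by move=> j; apply: ub.
have [Mb HMb] := bD f cf.
have [k Hk] : exists k : nat, Mb < k%:R by exists (Num.truncn Mb).+1; apply: Num.Theory.truncnS_gt.
have [Dk _ _ _ Lk] := P k.
have := HMb (chi k) Dk.
rewrite (Lpair_ext (g := (st k.+1).2)); last exact: fk.
move: Lk; rewrite -/(chi k) => Lk.
have E : (fun y => (st k).2 y + (sel k (st k).1 (st k).2).2.1 y) = (st k.+1).2 by [].
rewrite E in Lk.
lra.
Qed.

Lemma nat_above (x : realR) : exists k : nat, x < k%:R.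
Proof. by exists (Num.truncn x).+1; apply: Num.Theory.truncnS_gt. Qed.

Lemma pow2_small (e : realR) : 0 < e -> exists N : nat, 2 / 2 ^+ N < e.
Proof.
move=> e0; have [N HN] := nat_above (2 / e); exists N.
have N0 : 0 < N%:R :> realR by apply: le_lt_trans HN; rewrite divr_ge0 // ltW.
have p0 : 0 < (2:realR) ^+ N by rewrite exprn_gt0.
rewrite ltr_pdivrMr // -ltr_pdivrMl // mulrC.
apply: (lt_le_trans HN).
have : (N < 2 ^ N)%N by apply: ltn_expl.
by rewrite -(ltr_nat realR) natrX => /ltW.
Qed.

Lemma fin_set0 (X : topologicalType) : finite_set [set x : X | (fun _ : X => 0 : realR) x != 0].
Proof.
apply: (sub_finite_set _ (@finite_set0 X)) => x /=; by rewrite eqxx.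
Qed.

Definition Lzero (X : topologicalType) : LX X := exist _ (fun _ => 0) (fin_set0 X).

Fixpoint S2_state (X : topologicalType) (sel : nat -> (X -> realR) -> realR -> LX X * (X -> realR))
  (k : nat) : (X -> realR) * realR :=
  match k with
  | 0 => (fun _ => 0, 1)
  | k'.+1 => let s := S2_state sel k' in let p := sel k' s.1 s.2 in
     (fun x => s.1 x + ((2:realR) ^+ k')^-1 / s.2 * p.2 x, Num.max s.2 (L1 p.1 + 1))
  end.

Lemma S2 (X : topologicalType) (D : set (LX X)) : Lp_bounded D ->
  exists n : realR, forall chi (f : X -> realR), D chi -> continuous f ->
     (forall x, `|f x| <= 1) -> `|Lpair chi f| <= n.
Proof.
move=> bD; apply: contrapT => Hn.
have H : forall n : realR, exists chi (f : X -> realR),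
    [/\ D chi, continuous f, (forall x, `|f x| <= 1) & n < `|Lpair chi f|].
  move=> n; apply: contrapT => Hc; apply: Hn; exists n => chi f Dc cf f1.
  rewrite leNgt; apply/negP => lt; apply: Hc; by exists chi, f.
have step : forall (k : nat) (h : X -> realR) (M : realR),
   exists p : LX X * (X -> realR), (continuous h /\ 0 < M) ->
   [/\ D p.1, continuous p.2, (forall x, `|p.2 x| <= 1) &
       `|Lpair p.1 h| + k%:R + 1 < ((2:realR) ^+ k)^-1 / M * `|Lpair p.1 p.2|].
  move=> k h M.
  have [[ch M0]|nc] := pselect (continuous h /\ 0 < M); last first.
    by exists (Lzero X, fun _ => 0) => hc; exfalso; apply: nc.
  have [B HB] := bD h ch.
  set e := ((2:realR) ^+ k)^-1 / M.
  have e0 : 0 < e by rewrite /e divr_gt0 // invr_gt0 exprn_gt0.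
  have [chi [f [Dc cf f1 lt]]] := H ((B + k%:R + 1) / e).
  exists (chi, f) => _ /=; split => //.
  rewrite ltr_pdivrMr // in lt.
  have := HB chi Dc => hb.
  rewrite mulrC; lra.
pose sel k h M := projT1 (cid (step k h M)).
have selP k h M := projT2 (cid (step k h M)).
pose st := S2_state sel.
have stM : forall k, 1 <= (st k).2.
  elim => [|k IH] /=; first by [].
  by rewrite le_max IH.
have stM0 : forall k, 0 < (st k).2 by move=> k; apply: lt_le_trans (stM k).
have stc : forall k, continuous (st k).1.
  elim => [|k IH] /=; first exact: contC.
  apply: contD => //; apply: contM; first exact: contC.
  by case: (selP k (st k).1 (st k).2 (conj IH (stM0 k))).
pose chi k := (sel k (st k).1 (st k).2).1.
pose fk k := (sel k (st k).1 (st k).2).2.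
have P k : [/\ D (chi k), continuous (fk k), (forall x, `|fk k x| <= 1) &
       `|Lpair (chi k) (st k).1| + k%:R + 1 < ((2:realR) ^+ k)^-1 / (st k).2 * `|Lpair (chi k) (fk k)|].
  exact: (selP k (st k).1 (st k).2 (conj (stc k) (stM0 k))).
pose eps k := ((2:realR) ^+ k)^-1 / (st k).2.
have eps0 k : 0 <= eps k by rewrite /eps divr_ge0 // ?invr_ge0 ?exprn_ge0 // ltW.
have hstep k x : (st k.+1).1 x = (st k).1 x + eps k * fk k x by [].
have Mstep k : (st k.+1).2 = Num.max (st k).2 (L1 (chi k) + 1) by [].
have Mmono n i : (st n).2 <= (st (n + i)%N).2.
  elim: i => [|i IH]; first by rewrite addn0.
  by rewrite addnS Mstep le_max IH.
have bnd n i x : `|(st (n + i)%N).1 x - (st n).1 x| <=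
    (2 / 2 ^+ n - 2 / 2 ^+ (n + i)%N) / (st n).2.
  elim: i => [|i IH]; first by rewrite addn0 !subrr normr0 mul0r.
  rewrite addnS hstep.
  have e1 : `|eps (n + i)%N * fk (n + i)%N x| <= ((2:realR) ^+ (n + i)%N)^-1 / (st n).2.
    rewrite normrM (ger0_norm (eps0 _)).
    apply: le_trans (_ : eps (n + i)%N * 1 <= _).
      by rewrite ler_wpM2l //; case: (P (n + i)%N).
    rewrite mulr1 /eps ler_wpM2l ?invr_ge0 ?exprn_ge0 //.
    by rewrite lef_pV2 // ?posrE.
  have -> : (st (n + i)%N).1 x + eps (n + i)%N * fk (n + i)%N x - (st n).1 x =
     ((st (n + i)%N).1 x - (st n).1 x) + eps (n + i)%N * fk (n + i)%N x by ring.
  apply: le_trans (ler_normD _ _) _.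
  apply: le_trans (lerD IH e1) _.
  have p0 : (2:realR) ^+ (n + i)%N != 0 by rewrite expf_neq0.
  have M0 : (st n).2 != 0 by rewrite gt_eqF.
  rewrite exprS le_eqVlt; apply/orP; left; apply/eqP; field.
  apply/and3P; split; [exact: M0 | exact: p0 | by rewrite expf_neq0].
pose d n := 2 / 2 ^+ n / (st n).2.
have hd : forall n m x, (n <= m)%N -> `|(st m).1 x - (st n).1 x| <= d n.
  move=> n m x nm; rewrite -(subnKC nm); apply: le_trans (bnd _ _ x) _.
  rewrite /d; apply: ler_wpM2r; first by rewrite invr_ge0 ltW.
  by rewrite gerBl divr_ge0 // exprn_ge0.
have de : forall e, 0 < e -> exists N, d N < e.
  move=> e e0; have [N HN] := pow2_small e0; exists N; apply: le_lt_trans HN.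
  rewrite /d ler_pdivrMr // ler_peMr // divr_ge0 // exprn_ge0 //.
have [f [cf bdf]] := seq_lim stc hd de.
have [Mb HMb] := bD f cf.
have [k Hk] := nat_above Mb.
have [Dk cfk fk1 Pk] := P k.
set c := chi k in Dk Pk.
have E1 : Lpair c f = Lpair c (st k).1 + eps k * Lpair c (fk k) +
    Lpair c (fun x => f x - (st k.+1).1 x).
  rewrite -LpairZ -LpairD -LpairD; apply: Lpair_ext => x _; rewrite hstep; ring.
have E2 : `|Lpair c (fun x => f x - (st k.+1).1 x)| <= 1.
  apply: le_trans (Lpair_le (m := d k.+1) _) _; first by move=> x _; exact: bdf.
  apply: le_trans (_ : (st k.+1).2 * d k.+1 <= _).
    rewrite ler_wpM2r // ?/d ?divr_ge0 // ?exprn_ge0 ?ltW //.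
    by rewrite Mstep lt_max; apply/orP; right; rewrite /c ltrDl ltr01.
  have -> : (st k.+1).2 * d k.+1 = ((2:realR) ^+ k)^-1.
    have M0 : (st k.+1).2 != 0 by rewrite gt_eqF.
    have p0 : (2:realR) ^+ k != 0 by rewrite expf_neq0.
    rewrite /d exprS; field; apply/andP; split; [exact: p0 | exact: M0].
  rewrite invf_le1 ?exprn_ege1 //; lra.
have HB := HMb c Dk.
have T : `|eps k * Lpair c (fk k)| <= `|Lpair c f| + `|Lpair c (st k).1| + 1.
  have -> : eps k * Lpair c (fk k) = Lpair c f - Lpair c (st k).1 -
     Lpair c (fun x => f x - (st k.+1).1 x) by rewrite E1; ring.
  apply: le_trans (ler_normB _ _) _; rewrite lerD //.
  exact: ler_normB.
rewrite normrM (ger0_norm (eps0 k)) in T.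
move: Pk; rewrite -/(eps k); lra.
Qed.

Lemma clamp_id (v : realR) : `|v| <= 1 -> Num.max (-1) (Num.min 1 v) = v.
Proof.
rewrite ler_norml => /andP[h1 h2].
have -> : Num.min 1 v = v by apply/min_idPr.
by apply/max_idPr.
Qed.

Lemma clamp_le (v : realR) : `|Num.max (-1) (Num.min 1 v)| <= 1.
Proof.
rewrite ler_norml; apply/andP; split.
  by rewrite le_max lexx.
by rewrite ge_max ge_min lexx /= andbT; lra.
Qed.

Definition Bres (X : topologicalType) (K : (nat -> nat) -> set X) (a : nat -> nat) : set (LX X) :=
  [set chi | (forall x, proj1_sig chi x != 0 -> K (fun n => a n.+1) x) /\
     forall f : X -> realR, continuous f -> (forall x, K (fun n => a n.+1) x -> `|f x| <= 1) ->
       `|Lpair chi f| <= (a 0%N)%:R].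

Definition Kres (X : topologicalType) (B : (nat -> nat) -> set (LX X)) (a : nat -> nat) : set X :=
  closure [set x | B a (delta x)].

Theorem proposition3p8 (X : topologicalType) (hX : mu_space X) :
  (exists K : (nat -> nat) -> set X, fundamental_compact_resolution K) <->
  (exists B : (nat -> nat) -> set (LX X), Lp_fundamental_bounded_resolution B).
Proof.
case: hX => -[hH hR] muP; split.
- move=> [K [Kc Km Kcov Kf]]; exists (Bres K); split.
  + move=> a f cf.
    have [m m0 Hm] := cpt_bound (Kc (fun n => a n.+1)) cf.
    exists ((a 0%N)%:R * m) => chi [_ Hchi].
    have cg : continuous (fun x => m^-1 * f x) by apply: contM => //; exact: contC.
    have H : `|Lpair chi (fun x => m^-1 * f x)| <= (a 0%N)%:R.
      apply: Hchi cg _ => x Kx.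
      rewrite normrM ger0_norm ?invr_ge0 ?(ltW m0) // ler_pdivrMl // mulr1.
      exact: Hm.
    rewrite LpairZ normrM ger0_norm ?invr_ge0 ?(ltW m0) // ler_pdivrMl // in H.
    by rewrite mulrC.
  + move=> a b ab chi [H1 H2]; split.
      by move=> x /H1; apply: Km => n; exact: ab.
    move=> f cf Hf; apply: le_trans (H2 f cf _) _.
      by move=> x Kx; apply: Hf; apply: (Km _ _ _ _ Kx) => n; exact: ab.
    by rewrite ler_nat.
  + move=> chi.
    have [b Hb] := Kf _ (finite_compact (supp_fin chi)).
    have [N HN] := nat_above (L1 chi).
    exists (fun n => if n is n'.+1 then b n' else N); split.
      by move=> x cx; apply: Hb.
    move=> f cf Hf /=; apply: le_trans (Lpair_le (m := 1) _) _.
      by move=> x cx; apply: Hf; apply: Hb.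
    by rewrite mulr1 ltW.
  + move=> D bD.
    have fbS := S1 hH hR bD.
    have [b Hb] := Kf _ (muP _ fbS).
    have [n0 Hn0] := S2 bD.
    have [N HN] := nat_above n0.
    exists (fun n => if n is n'.+1 then b n' else N) => chi Dchi; split.
      move=> x cx; apply: Hb; apply: subset_closure; by exists chi.
    move=> f cf Hf /=.
    pose f' x := Num.max (-1) (Num.min 1 (f x)).
    have cf' : continuous f'.
      apply: contmax; first exact: contC.
      apply: contmin => //; exact: contC.
    rewrite (@Lpair_ext _ chi f f'); last first.
      move=> x cx; rewrite /f' clamp_id //; apply: Hf; apply: Hb.
      apply: subset_closure; by exists chi.
    apply: le_trans (Hn0 chi f' Dchi cf' _) _; first by move=> x; exact: clamp_le.
    exact: ltW.
- move=> [B [Bb Bm Bc Bf]]; exists (Kres B); split.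
  + move=> a; apply: muP => f cf.
    have [M HM] := Bb a f cf.
    by exists M => x Bx; rewrite -(Lpair_delta x f); apply: HM.
  + move=> a b ab; apply: closureS => x; exact: Bm.
  + move=> x; have [a Ha] := Bc (delta x); exists a; exact: subset_closure.
  + move=> C cC.
    pose D := [set chi | exists2 x, C x & chi = delta x].
    have bD : Lp_bounded D.
      move=> f cf; have [M _ HM] := cpt_bound cC cf.
      by exists M => chi [x Cx ->]; rewrite Lpair_delta; apply: HM.
    have [a Ha] := Bf D bD.
    exists a => x Cx; apply: subset_closure; apply: Ha; by exists x.
Qed.
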